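(* Let $\mathcal G$ be a connected rank-3 tensor Feynman graph as in the context, with $N_{\rm ext}\ge 6$ external legs. Let \[ \omega_{\deg}(\mathcal G)=-(V-1)+\tfrac12F_{\rm int}(\mathcal G). \] Then \[ \omega_{\deg}(\mathcal G)\le-\tfrac1{12}N_{\rm ext}. \]
   Context: Bubbles. Use colors $1,2,3$ for bubble edges and color $0$ for propagator lines. The tetrahedral bubble $\mathbf b_+$ is $K_4$ on $w_1,\dots,w_4$ with the following colored edges: \begin{itemize} \item $w_1w_2$ and $w_3w_4$ of color 1; \item $w_1w_3$ and $w_2w_4$ of color 2; \item $w_1w_4$ and $w_2w_3$ of color 3. \end{itemize} For $c\in\{1,2,3\}$, the melonic bubble $\mathbf b_c$ has vertices $w_1,\dots,w_4$ and the following edges: \begin{itemize} \item $w_1w_2$ doubled, carrying the two colors of $\{1,2,3\}\setminus\{c\}$; \item $w_3w_4$ doubled, carrying the two colors of $\{1,2,3\}\setminus\{c\}$; \item single edges $w_2w_3$ and $w_4w_1$ of color $c$. \end{itemize} Graphs. A graph $\mathcal G$ consists of the following data: \begin{itemize} \item $V=V_++V_m$ interaction vertices (copies of $\mathbf b_+$, resp. of some $\mathbf b_c$); \item $L$ internal color-0 lines joining bubble vertices, each bubble vertex incident to at most one line; \item a color-0 external leg at each bubble vertex not incident to a line. \end{itemize} Let $N_{\rm ext}$ be the number of external legs. The colored extension $\mathcal G_{\rm col}$ is the resulting 4-edge-colored graph. Connected means $\mathcal G_{\rm col}$ is connected. Faces. A face of color $c\in\{1,2,3\}$ is a connected component of the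 subgraph of $\mathcal G_{\rm col}$ formed by the color-0 edges and half-edges and the color-$c$ edges. It is internal if it is a cycle, and external if it is a path between two external legs. $F_{\rm int}(\mathcal G)$ is the number of internal faces. *)

(* Defs.v *)
From mathcomp Require Import all_boot all_order all_algebra.
Set Implicit Arguments. Unset Strict Implicit. Unset Printing Implicit Defensive.

(* Colors 1,2,3 of bubble edges are encoded by c : 'I_3, standing for color c+1.
   Color 0 (propagator lines and external legs) is handled separately.
   Bubble vertices w_1..w_4 are encoded by 'I_4 (w_k ~ k-1).
   A bubble type is an option 'I_3: None = tetrahedral b_+,
   Some c = melonic bubble b_(c+1). *)

Definition bubble_type := option 'I_3.

Definition bubble_edges (b : bubble_type) (c : 'I_3) : seq (nat * nat) :=
  match b with
  | None =>
      match val c with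
      | 0 => [:: (0, 1); (2, 3)]
      | 1 => [:: (0, 2); (1, 3)]
      | _ => [:: (0, 3); (1, 2)]
      end
  | Some m =>
      if c == m then [:: (1, 2); (3, 0)]
      else [:: (0, 1); (2, 3)]
  end.

Definition bubble_adj (b : bubble_type) (c : 'I_3) (u v : 'I_4) : bool :=
  (((u : nat), (v : nat)) \in bubble_edges b c)
  || (((v : nat), (u : nat)) \in bubble_edges b c).

(* A graph with V interaction bubbles. Bubble vertices: ('I_V * 'I_4).
   [line x = Some y] means an internal color-0 line joins x and y;
   [line x = None] means x carries an external leg. *)
Record feyn_graph (V : nat) := FeynGraph {
  kind : 'I_V -> bubble_type;
  line : ('I_V * 'I_4) -> option ('I_V * 'I_4);
  line_sym : forall x y, line x = Some y -> line y = Some x;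
  line_irr : forall x y, line x = Some y -> x <> y
}.

Section Graphs.
Variables (V : nat) (G : feyn_graph V).
Local Notation T := ('I_V * 'I_4)%type.

Definition col_edge (c : 'I_3) (x y : T) : bool :=
  (x.1 == y.1) && bubble_adj (kind G x.1) c x.2 y.2.

Definition line_edge (x y : T) : bool := line G x == Some y.

Definition gcol_rel (x y : T) : bool := [exists c, col_edge c x y] || line_edge x y.

Definition connected_graph : Prop := forall x y : T, connect gcol_rel x y.

Definition N_ext : nat := #|[set x : T | line G x == None]|.

Definition face_rel (c : 'I_3) (x y : T) : bool := col_edge c x y || line_edge x y.

(* x lies on an internal face of color c+1: its component contains no
   external leg (hence it is a cycle) *)
Definition on_internal_face (c : 'I_3) (x : T) : bool :=
  [forall y, connect (face_rel c) x y ==> (line G y != None)].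

Definition F_int_col (c : 'I_3) : nat :=
  #|[set [set y | connect (face_rel c) x y] | x in [set x | on_internal_face c x]]|.

Definition F_int : nat := \sum_(c < 3) F_int_col c.

End Graphs.

Local Open Scope ring_scope.
Definition omega_deg (V : nat) (G : feyn_graph V) : rat :=
  - (V%:Q - 1) + (F_int G)%:Q / 2.

(* Main.v *)
Require Import Defs.
From mathcomp Require Import all_boot all_order all_algebra.
Import Order.TTheory GRing.Theory Num.Theory.
Set Implicit Arguments. Unset Strict Implicit.
From mathcomp Require Import zify.

Definition pvn (k : bubble_type) (c : 'I_3) (v : nat) : nat :=
  match k with
  | None => match val c with
            | 0 => nth 0 [:: 1; 0; 3; 2] v
            | 1 => nth 0 [:: 2; 3; 0; 1] v
            | _ => nth 0 [:: 3; 2; 1; 0] v end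
  | Some m => if c == m then nth 0 [:: 3; 2; 1; 0] v else nth 0 [:: 1; 0; 3; 2] v
  end.
Definition pv k c (v : 'I_4) : 'I_4 := inord (pvn k c v).

Lemma pv_all k c v :
   bubble_adj k c v (pv k c v) && (pv k c (pv k c v) == v) && (pv k c v != v).
Proof.
case: k => [m|]; first case: m => [[|[|[|?]]] ?] //;
case: c => [[|[|[|?]]] ?] //; case: v => [[|[|[|[|?]]]] ?] //;
by rewrite /pv /pvn /bubble_adj /bubble_edges /= -!val_eqE /= !inordK.
Qed.

Lemma conn_closed (T' : finType) (e : rel T') (P : pred T') :
  (forall a b, e a b -> P a -> P b) -> forall a b, connect e a b -> P a -> P b.
Proof.
move=> H a b /connectP [p pth ->]; elim: p a pth => //= c p IH a /andP[eac pth] Pa.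
exact: IH pth (H _ _ eac Pa).
Qed.

Lemma invol_even (T' : finType) (f : T' -> T') (S : {set T'}) :
  {in S, forall a, f a \in S} -> {in S, forall a, f (f a) = a} ->
  {in S, forall a, f a != a} -> ~~ odd #|S|.
Proof.
have [n leMn] := ubnP #|S|; elim: n => // n IHn in S leMn *.
move=> fS ffS fnS.
case: (set_0Vmem S) => [->|[a aS]]; first by rewrite cards0.
set S' := S :\ a :\ f a.
have faS : f a \in S :\ a by rewrite !inE fnS // fS.
have cS : #|S| = (#|S'|).+2 by rewrite (cardsD1 a S) aS (cardsD1 (f a) (S :\ a)) faS.
have sub : {subset S' <= S} by move=> b; rewrite !inE => /and3P[].
rewrite cS /= negbK.
apply: IHn.
- by rewrite cS ltnS in leMn; apply: leq_trans leMn.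
- move=> b bS'; have := bS'; rewrite !inE => /and3P[bfa ba bS].
  rewrite fS // andbT; apply/andP; split.
  + by apply: contra ba => /eqP h; rewrite -(ffS b bS) h ffS.
  + by apply: contra bfa => /eqP h; rewrite -(ffS b bS) h.
- by move=> b /sub; apply: ffS.
- by move=> b /sub; apply: fnS.
Qed.

Section Main.
Variable V : nat.
Local Notation T := ('I_V * 'I_4)%type.
Implicit Types (G : feyn_graph V).

Definition pc G (c : 'I_3) (x : T) : T := (x.1, pv (kind G x.1) c x.2).

Lemma col_edge_pc G c x : col_edge G c x (pc G c x).
Proof. rewrite /col_edge /pc /= eqxx /=. by case/andP: (pv_all (kind G x.1) c x.2) => /andP[]. Qed.
Lemma pcK G c x : pc G c (pc G c x) = x.
Proof. case: x => b v; rewrite /pc /=. by case/andP: (pv_all (kind G b) c v) => /andP[_ /eqP->]. Qed.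
Lemma pc_neq G c x : pc G c x != x.
Proof. case: x => b v; rewrite /pc /= xpair_eqE eqxx /=. by case/andP: (pv_all (kind G b) c v). Qed.

Lemma col_edge_sym G c : symmetric (col_edge G c).
Proof.
move=> x y; rewrite /col_edge [y.1 == x.1]eq_sym; case: eqP => //= ->.
by rewrite /bubble_adj orbC.
Qed.

Lemma line_edge_sym G : symmetric (line_edge G).
Proof. by move=> x y; rewrite /line_edge; apply/idP/idP => /eqP/line_sym/eqP. Qed.

Lemma face_rel_sym G c : symmetric (face_rel G c).
Proof. by move=> x y; rewrite /face_rel col_edge_sym line_edge_sym. Qed.

Lemma gcol_sym G : symmetric (gcol_rel G).
Proof.
move=> x y; rewrite /gcol_rel line_edge_sym; congr orb.
by apply: eq_existsb => c; rewrite col_edge_sym.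
Qed.

Lemma intl_line G c x : on_internal_face G c x -> line G x != None.
Proof. by move/forallP/(_ x)/implyP; apply; exact: connect0. Qed.

Lemma intl_conn G c x y : on_internal_face G c x ->
  connect (face_rel G c) x y -> on_internal_face G c y.
Proof.
move=> /forallP H xy; apply/forallP => z; apply/implyP => yz.
exact: (implyP (H z)) (connect_trans xy yz).
Qed.

Lemma N_ext_le G : N_ext G <= 4 * V.
Proof.
rewrite /N_ext; apply: leq_trans (max_card _) _.
by rewrite card_prod !card_ord mulnC.
Qed.

Section Remove.
Variables (G : feyn_graph V) (x y : T).
Hypothesis Hxy : line G x = Some y.

Lemma Hyx : line G y = Some x.
Proof. exact: line_sym. Qed.

Lemma xny : x != y.
Proof. by apply/eqP; apply: line_irr Hxy. Qed.

Definition rline (w : T) := if (w == x) || (w == y) then None else line G w.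

Lemma rline_sym a b : rline a = Some b -> rline b = Some a.
Proof.
rewrite /rline; case: ifP => // /norP[ax ay] lab.
have lba := line_sym lab.
case: ifP => [/orP[/eqP bx|/eqP by_]|_]; last done.
- subst b; rewrite Hxy in lba; case: lba => ya.
  by rewrite ya eqxx in ay.
- subst b; rewrite Hyx in lba; case: lba => xa.
  by rewrite xa eqxx in ax.
Qed.

Lemma rline_irr a b : rline a = Some b -> a <> b.
Proof. rewrite /rline; case: ifP => // _; exact: line_irr. Qed.

Definition Grem : feyn_graph V := @FeynGraph V (kind G) rline rline_sym rline_irr.

Lemma N_rem : N_ext Grem = N_ext G + 2.
Proof.
rewrite /N_ext.
have -> : [set w | line Grem w == None] = [set x; y] :|: [set w | line G w == None].
  apply/setP => w; rewrite !inE /= /rline.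
  by case: ifP => //.
rewrite cardsU cards2 xny.
have -> : [set x; y] :&: [set w | line G w == None] = set0.
  apply/setP => w; rewrite !inE.
  by case/orP: (orbN (w == x)) => [/eqP->|]; [rewrite Hxy /= andbF | move/negPf->; case: eqP => //= ->; rewrite Hyx].
by rewrite cards0 subn0 addnC.
Qed.


Section Color.
Variable c : 'I_3.
Local Notation fr := (face_rel G c).
Local Notation fr' := (face_rel Grem c).

Lemma fr_sub a b : fr' a b -> fr a b.
Proof.
rewrite /face_rel /line_edge; case/orP=> [h|]; first by apply/orP; left; exact: h.
by rewrite /= /rline; case: ifP => // _ ->; rewrite orbT.
Qed.

Lemma fr_out a b : a != x -> a != y -> fr a b = fr' a b.
Proof. by move=> ax ay; rewrite /face_rel /line_edge /= /rline (negPf ax) (negPf ay). Qed.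

Lemma fr_xy : connect fr x y.
Proof. by apply: connect1; rewrite /face_rel /line_edge Hxy eqxx orbT. Qed.

Lemma sym_fr : connect_sym fr.
Proof. exact: sym_connect_sym (face_rel_sym G c). Qed.

Lemma nconn_xy a : ~~ connect fr x a -> (a != x) && (a != y).
Proof.
move=> nxa; apply/andP; split; apply: contra nxa => /eqP->; first exact: connect0.
exact: fr_xy.
Qed.

Lemma conn_eq z w : ~~ connect fr x z -> connect fr z w = connect fr' z w.
Proof.
move=> nxz; apply/idP/idP; last first.
  by apply: connect_sub => a b /fr_sub; exact: connect1.
case/connectP => p pth ->; apply/connectP; exists p => //.
apply: (sub_in_path (P := [pred a | ~~ connect fr x a])); last exact: pth.
  move=> a b; rewrite !inE => nxa _ fab.
  by case/andP: (nconn_xy nxa) => ax ay; rewrite -fr_out.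
apply/allP => a /(path_connect pth) za; rewrite inE; apply: contra nxz => xa.
by apply: connect_trans xa _; rewrite sym_fr.
Qed.

Lemma nconn_trans z w : ~~ connect fr x z -> connect fr z w -> ~~ connect fr x w.
Proof.
move=> nxz zw; apply: contra nxz => xw; apply: connect_trans xw _.
by rewrite sym_fr.
Qed.

Lemma intl_eq z : ~~ connect fr x z ->
  on_internal_face Grem c z = on_internal_face G c z.
Proof.
move=> nxz; apply: eq_forallb => w; rewrite -conn_eq //.
case: (boolP (connect fr z w)) => //= zw.
case/andP: (nconn_xy (nconn_trans nxz zw)) => wx wy.
by rewrite /rline (negPf wx) (negPf wy).
Qed.

Lemma cls_eq z : ~~ connect fr x z ->
  [set w | connect fr z w] = [set w | connect fr' z w].
Proof. by move=> nxz; apply/setP => w; rewrite !inE conn_eq. Qed.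

Lemma count_col : F_int_col G c <= F_int_col Grem c + on_internal_face G c x.
Proof.
rewrite /F_int_col.
set I := [set z | on_internal_face G c z].
set I0 := [set z in I | ~~ connect fr x z].
have H1 : [set [set w | connect fr z w] | z in I] \subset
   [set [set w | connect fr z w] | z in I0] :|:
   (if on_internal_face G c x then [set [set w | connect fr x w]] else set0).
  apply/subsetP => S /imsetP [z zI ->].
  case: (boolP (connect fr x z)) => xz.
    have ix : on_internal_face G c x.
      by rewrite inE in zI; apply: intl_conn zI _; rewrite sym_fr.
    rewrite ix !inE; apply/orP; right; apply/eqP/setP => w; rewrite !inE.
    by rewrite (same_connect sym_fr xz).
  by rewrite inE; apply/orP; left; apply/imsetP; exists z => //; rewrite inE zI xz.
have H2 : [set [set w | connect fr z w] | z in I0] \subset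
   [set [set w | connect fr' z w] | z in [set z | on_internal_face Grem c z]].
  apply/subsetP => S /imsetP[z]; rewrite inE => /andP[zI nxz] ->.
  apply/imsetP; exists z; last exact: cls_eq.
  by rewrite inE intl_eq //; rewrite inE in zI.
apply: (leq_trans (subset_leq_card H1)); rewrite cardsU.
apply: (leq_trans (leq_subr _ _)); apply: leq_add; first exact: subset_leq_card H2.
by case: (on_internal_face G c x); rewrite ?cards1 ?cards0.
Qed.

End Color.

Lemma count_all : (exists c, ~~ on_internal_face G c x) -> F_int G <= F_int Grem + 2.
Proof.
case=> c0 n0.
have H : F_int G <= F_int Grem + \sum_(c < 3) on_internal_face G c x.
  by rewrite /F_int -big_split /=; apply: leq_sum => c _; exact: count_col.
apply: leq_trans H _; rewrite leq_add2l (bigD1 c0) //= (negPf n0) add0n.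
apply: leq_trans (_ : \sum_(c < 3 | c != c0) 1 <= 2).
  by apply: leq_sum => c _; exact: leq_b1.
by rewrite sum1_card cardC1 card_ord.
Qed.

Lemma conn_rem_xy c0 : on_internal_face G c0 x -> connect (face_rel Grem c0) x y.
Proof.
move=> ix; apply/negPn/negP => nxy.
set C := [set w | connect (face_rel Grem c0) x w].
have xC : x \in C by rewrite inE connect0.
have CinG w : w \in C -> connect (face_rel G c0) x w.
  by rewrite inE; apply: connect_sub => a b /fr_sub; exact: connect1.
have Cline w : w \in C -> line G w != None.
  by move=> /CinG xw; apply: intl_line (intl_conn ix xw).
have e1 : ~~ odd #|C|.
  apply: (invol_even (f := pc G c0)).
  - move=> a; rewrite !inE => xa; apply: connect_trans xa (connect1 _).
    by rewrite /face_rel; apply/orP; left; exact: col_edge_pc.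
  - by move=> a _; exact: pcK.
  - by move=> a _; exact: pc_neq.
have hl a : a \in C :\ x -> exists b, rline a = Some b.
  rewrite in_setD1 => /andP[ax aC].
  have ay : a != y by apply: contra nxy => /eqP <-; rewrite inE in aC.
  have := Cline a aC.
  rewrite /rline (negPf ax) (negPf ay).
  by case: (line G a) => // b _; exists b.
have e2 : ~~ odd #|C :\ x|.
  apply: (invol_even (f := fun w => odflt w (rline w))).
  - move=> a aC; have [b hb] := hl a aC; rewrite hb /=.
    move: aC; rewrite !in_setD1 => /andP[ax aC]; apply/andP; split.
      apply/eqP => bx; have := rline_sym hb; rewrite bx /rline eqxx //.
    rewrite inE in aC; rewrite /C inE; apply: connect_trans aC (connect1 _).
    by rewrite /face_rel /line_edge /= hb eqxx orbT.
  - by move=> a aC; have [b hb] := hl a aC; rewrite hb /= (rline_sym hb).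
  - move=> a aC; have [b hb] := hl a aC; rewrite hb /=.
    by apply/eqP => ba; apply: (rline_irr hb); rewrite ba.
by move: e1; rewrite (cardsD1 x C) xC /= e2.
Qed.

Lemma conn_rem : connected_graph G -> (exists c0, on_internal_face G c0 x) ->
  connected_graph Grem.
Proof.
move=> HG [c0 ix] a b; apply: connect_sub (HG a b) => u v.
have xy' : connect (gcol_rel Grem) x y.
  apply: connect_sub (conn_rem_xy ix) => a' b' /orP[h|h]; apply: connect1.
    by apply/orP; left; apply/existsP; exists c0.
  by apply/orP; right.
rewrite /gcol_rel => /orP [ce | le].
  by apply: connect1; apply/orP; left.
case: (boolP ((u == x) || (u == y))) => [/orP[/eqP ux|/eqP uy]|nu].
- move: le; rewrite /line_edge ux Hxy => /eqP[<-]; exact: xy'.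
- move: le; rewrite /line_edge uy Hyx => /eqP[<-].
  by rewrite (sym_connect_sym (gcol_sym Grem)).
- apply: connect1; apply/orP; right.
  by rewrite /line_edge /= /rline (negPf nu).
Qed.

End Remove.
Lemma exists_good G : connected_graph G -> 0 < N_ext G -> 0 < F_int G ->
  exists x y, [/\ line G x = Some y, exists c, on_internal_face G c x &
                  exists c, ~~ on_internal_face G c x].
Proof.
move=> HG NG FG.
have [c1 [z iz]] : exists c z, on_internal_face G c z.
  case: (boolP [exists c, exists z, on_internal_face G c z]).
    by case/existsP => c /existsP[z iz]; exists c, z.
  move/existsPn => H; exfalso.
  have : F_int G = 0.
    rewrite /F_int big1 // => c _; rewrite /F_int_col.
    have -> : [set x | on_internal_face G c x] = set0.
      apply/setP => w; rewrite !inE.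
      by move/existsPn: (H c) => /(_ w) /negPf ->.
    by rewrite imset0 cards0.
  by move=> F0; rewrite F0 in FG.
case/card_gt0P: NG => e; rewrite inE => eN.
case: (boolP [exists w, [exists c, on_internal_face G c w] &&
                        [exists c, ~~ on_internal_face G c w]]).
  case/existsP => w /andP[/existsP[c iw] /existsP[c' niw]].
  case Hl: (line G w) => [v|]; last by move: (intl_line iw); rewrite Hl.
  by exists w, v; split=> //; [exists c | exists c'].
move/existsPn => H; exfalso.
have key b c : on_internal_face G c b -> [forall c, on_internal_face G c b].
  move=> ib; move: (H b); rewrite negb_and => /orP[/existsPn h|/existsPn h].
    by move: (h c); rewrite ib.
  by apply/forallP => c'; move: (h c'); rewrite negbK.
have P_closed a b : gcol_rel G a b -> [forall c, on_internal_face G c a] ->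
                    [forall c, on_internal_face G c b].
  move=> gab /forallP Pa.
  case/orP: gab => [/existsP[c ce]|le].
    apply: (key _ c); apply: intl_conn (Pa c) _; apply: connect1.
    by rewrite /face_rel ce.
  apply/forallP => c; apply: intl_conn (Pa c) _; apply: connect1.
  by rewrite /face_rel le orbT.
have Pe := conn_closed P_closed (HG z e) (key _ _ iz).
by move/forallP: Pe => /(_ c1) /intl_line; rewrite (eqP eN).
Qed.

Lemma tree_bound G : connected_graph G -> N_ext G <= 2 * V + 2.
Proof.
move=> HG.
case: (pickP (fun _ : T => true)) => [a _|none]; last first.
  rewrite /N_ext (_ : [set x | _] = set0) ?cards0 //.
  by apply/setP => w; have := none w.
pose b0 := a.1.
pose F (S : {set 'I_V}) := b0 |: [set b | [exists w : T, (w.1 == b) &&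
     (if line G w is Some u then u.1 \in S else false)]].
have Fmono : {homo F : X Y / X \subset Y}.
  move=> X Y sXY; apply/subsetP => b; rewrite !inE.
  case/orP => [->//|/existsP[w /andP[wb hw]]]; apply/orP; right.
  apply/existsP; exists w; rewrite wb /=.
  by case: (line G w) hw => // u; exact: (subsetP sXY).
pose R := fixset F.
have FR : F R = R by exact: fixsetK.
have allR : forall w : T, w.1 \in R.
  move=> w; apply: (conn_closed (P := fun w : T => w.1 \in R)) (HG a w) _.
    move=> u v /orP[/existsP[c /andP[/eqP <- _]] //|].
    rewrite /line_edge => /eqP /line_sym luv uR.
    rewrite -FR !inE; apply/orP; right; apply/existsP; exists v.
    by rewrite eqxx luv.
  by rewrite -FR !inE eqxx.
pose d (b : 'I_V) := fix_order F b.
pose p (w : T) := odflt w (line G w).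
have depth (w : T) : w.1 != b0 ->
    exists w', [/\ w'.1 = w.1, line G w' != None & d (p w').1 < d w.1].
  move=> wb.
  have := allR w; rewrite -(in_iter_fix_orderE F) -/(d w.1).
  have := allR w; rewrite -(fix_order_gt0 F) -/(d w.1).
  case: (d w.1) => // k _; rewrite iterS.
  rewrite !inE (negPf wb) /= => /existsP[w' /andP[/eqP w'b hw']].
  exists w'; move: hw'; rewrite /p.
  case: (line G w') => // u uI; split => //.
  by rewrite ltnS; apply: (fix_order_small Fmono).
have pK (w : T) : line G w != None -> line G (p w) = Some w.
  by rewrite /p; case H: (line G w) => [u|] //= _; exact: line_sym.
set X := [set w : T | (line G w != None) && (d (p w).1 < d w.1)].
set Y := p @: X.
have cX : V.-1 <= #|X|.
  have : [set~ b0] \subset (fun w : T => w.1) @: X.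
    apply/subsetP => b; rewrite !inE => bb.
    have [w' [w'b lw' dw']] := depth (b, ord0) bb.
    by apply/imsetP; exists w'; rewrite ?inE ?lw' //= w'b.
  move/subset_leq_card; rewrite cardsC1 card_ord => h.
  exact: leq_trans h (leq_imset_card _ _).
have cY : #|Y| = #|X|.
  apply: card_in_imset => w1 w2; rewrite !inE => /andP[l1 _] /andP[l2 _] e12.
  by have := pK _ l1; rewrite e12 pK // => -[->].
have dXY : X :&: Y = set0.
  apply/setP => w; rewrite !inE; apply/negP => /andP[/andP[lw dw] /imsetP[v]].
  rewrite inE => /andP[lv dv] wv.
  have pw : p w = v by rewrite wv {1}/p pK.
  by rewrite pw in dw; rewrite -wv in dv; lia.
have sub : X :|: Y \subset [set w : T | line G w != None].
  apply/subsetP => w; rewrite !inE => /orP[/andP[-> _] //|/imsetP[v]].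
  by rewrite inE => /andP[lv _] ->; rewrite pK.
have cL : #|[set w : T | line G w != None]| + N_ext G = 4 * V.
  rewrite /N_ext addnC.
  have -> : [set w : T | line G w != None] = ~: [set w : T | line G w == None].
    by apply/setP => w; rewrite !inE.
  by rewrite cardsC card_prod !card_ord mulnC.
have := subset_leq_card sub; rewrite cardsU dXY cards0 subn0 cY.
move: cX cL; lia.
Qed.

Lemma main_ind k G : 4 * V <= N_ext G + k -> connected_graph G -> 0 < N_ext G ->
  F_int G + N_ext G <= 2 * V + 2.
Proof.
elim: k G => [|k IH] G Hk HG NG;
  (case: (posnP (F_int G)) => [F0|Fpos]; first by rewrite F0 add0n; exact: tree_bound);
  have [x [y [Hxy ex nex]]] := exists_good HG NG Fpos;
  have NG' := N_rem Hxy; have FG' := count_all Hxy nex;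
  have CG' := conn_rem Hxy HG ex.
  by have := N_ext_le (Grem Hxy); rewrite NG'; lia.
have := IH (Grem Hxy); rewrite NG' => /(_ _ CG'); lia.
Qed.

End Main.

From mathcomp Require Import lra.
Unset Implicit Arguments. Set Strict Implicit.
Local Open Scope ring_scope.

Theorem lemma1 (V : nat) (G : feyn_graph V) :
  connected_graph G -> (6 <= N_ext G)%N ->
  omega_deg G <= - ((N_ext G)%:Q / 12).
Proof.
move=> HG N6.
have H := @main_ind V (4 * V) G (leq_addl _ _) HG (leq_trans (isT : (0 < 6)%N) N6).
rewrite /omega_deg.
have H' : ((F_int G + N_ext G)%N%:R <= (2 * V + 2)%N%:R :> rat) by rewrite ler_nat.
have N6' : (6%:R <= (N_ext G)%:R :> rat) by rewrite ler_nat.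
rewrite !natrD in H'.
rewrite !pmulrn.
lra.
Qed.
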